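(* Consider the heterogeneous agents $\dot x_i=\sum_{j=1}^N\alpha_{ij}(t)(\mathrm{sat}_j(x_j)-\mathrm{sat}_i(x_i))$, $i\in\{1,\dots,N\}$, with $s_1>s_2>\dots>s_N>0$ and time-varying undirected weights satisfying the standing assumptions. Let $k\in\{1,\dots,N\}$ and $\mathcal V_k=\{1,\dots,k\}$. If $x_i(t^* )\in[-s_k,s_k]$ for all $i\in\mathcal V_k$ at some $t^*\ge t_0$, then $x_i(t)\in[-s_k,s_k]$ for all $i\in\mathcal V_k$ and all $t\ge t^*$.
   Context: $\mathrm{sat}_i(x)=\mathrm{sign}(x)\min\{|x|,s_i\}$. Standing assumptions: $\alpha_{ij}(t)=\alpha_{ji}(t)\ge0$, each $\alpha_{ij}$ continuous on $[0,\infty)$ except on a set of measure zero; Carathéodory solutions. *)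

(* Defs.v *)
From Stdlib Require Import Reals Lra.
Open Scope R_scope.

Definition sign (x : R) : R :=
  if Rlt_dec 0 x then 1 else if Rlt_dec x 0 then -1 else 0.

Definition sat (s x : R) : R := sign x * Rmin (Rabs x) s.

Fixpoint sumR_upto (n : nat) (f : nat -> R) : R :=
  match n with
  | O => 0
  | S n' => sumR_upto n' f + f n
  end.
(* sumR_upto n f = f 1 + ... + f n *)

Definition negligible (E : R -> Prop) : Prop :=
  forall eps, 0 < eps ->
  exists a b : nat -> R,
    (forall n, a n <= b n) /\
    (forall x, E x -> exists n, a n < x < b n) /\
    (forall M, sum_f_R0 (fun n => b n - a n) M < eps).

(* absolute continuity of f on [a,b]: for n non-overlapping subintervals
   [u 1, v 1], ..., [u n, v n] of [a,b] (in increasing order) *)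
Definition abs_continuous_on (f : R -> R) (a b : R) : Prop :=
  forall eps, 0 < eps -> exists delta, 0 < delta /\
  forall (n : nat) (u v : nat -> R),
    (forall i, (1 <= i <= n)%nat -> a <= u i /\ u i <= v i /\ v i <= b) ->
    (forall i, (1 <= i < n)%nat -> v i <= u (S i)) ->
    sumR_upto n (fun i => v i - u i) < delta ->
    sumR_upto n (fun i => Rabs (f (v i) - f (u i))) < eps.

Definition loc_abs_continuous_from (f : R -> R) (t0 : R) : Prop :=
  forall T, t0 <= T -> abs_continuous_on f t0 T.

Definition standing_weights (N : nat) (alpha : nat -> nat -> R -> R) : Prop :=
  forall i j, (1 <= i <= N)%nat -> (1 <= j <= N)%nat ->
    (forall t, 0 <= t -> alpha i j t = alpha j i t /\ 0 <= alpha i j t) /\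
    (exists E, negligible E /\
       forall t, 0 <= t -> ~ E t -> continuity_pt (alpha i j) t).

Definition cara_solution (N : nat) (s : nat -> R) (alpha : nat -> nat -> R -> R)
  (t0 : R) (x : nat -> R -> R) : Prop :=
  forall i, (1 <= i <= N)%nat ->
    loc_abs_continuous_from (x i) t0 /\
    exists E, negligible E /\
      forall t, t0 < t -> ~ E t ->
        derivable_pt_lim (x i) t
          (sumR_upto N (fun j => alpha i j t *
                                  (sat (s j) (x j t) - sat (s i) (x i t)))).

(* Main.v *)
Require Import Defs.
From Stdlib Require Import Reals Lra Lia Classical.
Open Scope R_scope.

Lemma sumR_ext n f g : (forall i, (1 <= i <= n)%nat -> f i = g i) ->
  sumR_upto n f = sumR_upto n g.
Proof.
  induction n; simpl; intros H; auto.
  rewrite IHn by (intros; apply H; lia). rewrite H by lia. reflexivity.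
Qed.

Lemma sumR_le n f g : (forall i, (1 <= i <= n)%nat -> f i <= g i) ->
  sumR_upto n f <= sumR_upto n g.
Proof.
  induction n; simpl; intros H; [lra|].
  assert (sumR_upto n f <= sumR_upto n g) by (apply IHn; intros; apply H; lia).
  assert (f (S n) <= g (S n)) by (apply H; lia). lra.
Qed.

Lemma sumR_plus n f g : sumR_upto n (fun i => f i + g i) = sumR_upto n f + sumR_upto n g.
Proof. induction n; simpl; [lra|]. rewrite IHn. lra. Qed.

Lemma sumR_scal n c f : sumR_upto n (fun i => c * f i) = c * sumR_upto n f.
Proof. induction n; simpl; [lra|]. rewrite IHn. lra. Qed.

Lemma sumR_const n c : sumR_upto n (fun _ => c) = INR n * c.
Proof. induction n; simpl sumR_upto; [simpl; lra|]. rewrite IHn, S_INR. lra. Qed.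

Lemma sumR_nonpos n f : (forall i, (1 <= i <= n)%nat -> f i <= 0) -> sumR_upto n f <= 0.
Proof.
  intros H. apply Rle_trans with (sumR_upto n (fun _ => 0)).
  apply sumR_le; auto. rewrite sumR_const. lra.
Qed.

Lemma sumR_nonneg n f : (forall i, (1 <= i <= n)%nat -> 0 <= f i) -> 0 <= sumR_upto n f.
Proof.
  intros H. apply Rle_trans with (sumR_upto n (fun _ => 0)).
  rewrite sumR_const. lra. apply sumR_le; auto.
Qed.

Lemma sumR_ge_term n f i : (forall j, (1 <= j <= n)%nat -> 0 <= f j) ->
  (1 <= i <= n)%nat -> f i <= sumR_upto n f.
Proof.
  induction n; intros H Hi; [lia|]. simpl.
  destruct (Nat.eq_dec i (S n)) as [->|Hne].
  - assert (0 <= sumR_upto n f) by (apply sumR_nonneg; intros; apply H; lia). lra.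
  - assert (f i <= sumR_upto n f) by (apply IHn; [intros; apply H; lia| lia]).
    assert (0 <= f (S n)) by (apply H; lia). lra.
Qed.

Lemma sumR_swap n m (f : nat -> nat -> R) :
  sumR_upto n (fun i => sumR_upto m (fun j => f i j)) =
  sumR_upto m (fun j => sumR_upto n (fun i => f i j)).
Proof.
  induction n; simpl.
  - rewrite sumR_const. lra.
  - rewrite IHn, sumR_plus. reflexivity.
Qed.

Lemma sumR_low N k f : (k <= N)%nat ->
  sumR_upto N (fun j => if (j <=? k)%nat then f j else 0) = sumR_upto k f.
Proof.
  induction N; intros Hk.
  - assert (k = 0%nat) by lia. subst. reflexivity.
  - destruct (Nat.eq_dec k (S N)) as [->|Hne].
    + apply sumR_ext. intros i Hi. destruct (Nat.leb_spec i (S N)); [reflexivity|lia].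
    + cbn [sumR_upto]. rewrite IHN by lia. replace (S N <=? k)%nat with false by (symmetry; apply Nat.leb_gt; lia). lra.
Qed.

Lemma sumR_split N k f : (k <= N)%nat ->
  sumR_upto N f = sumR_upto k f + sumR_upto N (fun j => if (j <=? k)%nat then 0 else f j).
Proof.
  intros Hk. rewrite <- (sumR_low N k f Hk), <- sumR_plus.
  apply sumR_ext. intros i _. destruct (i <=? k)%nat; lra.
Qed.

Lemma sat_opp s y : sat s (- y) = - sat s y.
Proof.
  unfold sat, sign. rewrite Rabs_Ropp.
  destruct (Rlt_dec 0 (-y)), (Rlt_dec 0 y), (Rlt_dec (-y) 0), (Rlt_dec y 0); lra.
Qed.

Lemma sat_ge c s y : 0 < c -> c <= s -> c <= y -> c <= sat s y.
Proof.
  intros. unfold sat, sign. destruct (Rlt_dec 0 y); [|lra].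
  rewrite Rabs_right by lra. unfold Rmin. destruct (Rle_dec y s); lra.
Qed.

Lemma sat_le c s y : 0 <= c -> 0 <= s -> y <= c -> sat s y <= c.
Proof.
  intros. unfold sat, sign. destruct (Rlt_dec 0 y).
  - rewrite Rabs_right by lra. unfold Rmin. destruct (Rle_dec y s); lra.
  - destruct (Rlt_dec y 0).
    + assert (0 <= Rmin (Rabs y) s) by (apply Rmin_glb; [apply Rabs_pos|lra]). lra.
    + lra.
Qed.

Lemma sat_le_s s y : 0 <= s -> sat s y <= s.
Proof.
  intros. unfold sat, sign. assert (Rmin (Rabs y) s <= s) by apply Rmin_r.
  assert (0 <= Rmin (Rabs y) s) by (apply Rmin_glb; [apply Rabs_pos|lra]).
  destruct (Rlt_dec 0 y); [lra|]. destruct (Rlt_dec y 0); lra.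
Qed.
Lemma sum_f_mono f m M : (forall n, 0 <= f n) -> (m <= M)%nat ->
  sum_f_R0 f m <= sum_f_R0 f M.
Proof.
  intros Hf Hm. induction M.
  - assert (m = 0%nat) by lia. subst. lra.
  - destruct (Nat.eq_dec m (S M)) as [->|Hne]; [lra|].
    simpl. specialize (Hf (S M)). assert (sum_f_R0 f m <= sum_f_R0 f M) by (apply IHM; lia). lra.
Qed.

Lemma neg_mono (E F : R -> Prop) : negligible F -> (forall t, E t -> F t) -> negligible E.
Proof.
  intros HF Hs eps Heps. destruct (HF eps Heps) as (a & b & H1 & H2 & H3).
  exists a, b. repeat split; auto.
Qed.

Lemma neg_empty : negligible (fun _ => False).
Proof.
  intros eps Heps. exists (fun _ => 0), (fun _ => 0). split; [|split].
  - intros; lra.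
  - intros y Hy; destruct Hy.
  - intros M. induction M; simpl; lra.
Qed.

Lemma neg_single a : negligible (fun t => t = a).
Proof.
  intros eps Heps.
  exists (fun n => match n with O => a - eps/4 | S _ => 0 end),
         (fun n => match n with O => a + eps/4 | S _ => 0 end).
  split; [|split].
  - intros [|n]; lra.
  - intros y Hy. subst y. exists O. lra.
  - intros M. induction M; simpl in *; lra.
Qed.

Definition inter (f g : nat -> R) (n : nat) : R :=
  if Nat.even n then f (Nat.div2 n) else g (Nat.div2 n).

Lemma inter_sum f g M : sum_f_R0 (fun n => inter f g n) (S (2 * M)) =
   sum_f_R0 f M + sum_f_R0 g M.
Proof.
  induction M.
  - simpl. unfold inter. simpl. lra.
  - replace (S (2 * S M)) with (S (S (S (2 * M)))) by lia.
    rewrite (tech5 _ (S (S (2*M)))), (tech5 _ (S (2*M))), IHM, (tech5 f), (tech5 g). unfold inter.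
    replace (S (S (2 * M))) with (2 * S M)%nat by lia.
    replace (S (2 * S M)) with (S (2 * S M))%nat by lia.
    rewrite Nat.even_succ, Nat.odd_mul, Nat.even_mul, Nat.div2_double, Nat.div2_succ_double.
    simpl. lra.
Qed.

Lemma neg_union (E F : R -> Prop) : negligible E -> negligible F ->
  negligible (fun t => E t \/ F t).
Proof.
  intros HE HF eps Heps.
  destruct (HE (eps/2)) as (a1 & b1 & H11 & H12 & H13); [lra|].
  destruct (HF (eps/2)) as (a2 & b2 & H21 & H22 & H23); [lra|].
  exists (inter a1 a2), (inter b1 b2). split; [|split].
  - intros n. unfold inter. destruct (Nat.even n); auto.
  - intros x [Hx|Hx].
    + destruct (H12 x Hx) as [n Hn]. exists (2 * n)%nat. unfold inter.
      rewrite Nat.even_mul, Nat.div2_double. simpl. auto.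
    + destruct (H22 x Hx) as [n Hn]. exists (S (2 * n))%nat. unfold inter.
      rewrite Nat.even_succ, Nat.odd_mul, Nat.div2_succ_double. simpl. auto.
  - intros M.
    assert (Heq : forall n, inter b1 b2 n - inter a1 a2 n = inter (fun n => b1 n - a1 n) (fun n => b2 n - a2 n) n)
      by (intros n; unfold inter; destruct (Nat.even n); reflexivity).
    rewrite (sum_eq _ _ M (fun n _ => Heq n)).
    eapply Rle_lt_trans.
    apply sum_f_mono with (M := S (2 * M)).
    + intros n. unfold inter. destruct (Nat.even n); [specialize (H11 (Nat.div2 n))|specialize (H21 (Nat.div2 n))]; lra.
    + lia.
    + rewrite inter_sum. specialize (H13 M). specialize (H23 M). lra.
Qed.
Lemma ac_left f t0 a b : abs_continuous_on f t0 b -> t0 <= a -> abs_continuous_on f a b.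
Proof.
  intros H Ha eps Heps. destruct (H eps Heps) as (d & Hd & Hd2).
  exists d; split; auto. intros n u v H1 H2 H3. apply Hd2; auto.
  intros i Hi. specialize (H1 i Hi). lra.
Qed.

Lemma ac_zero a b : abs_continuous_on (fun _ => 0) a b.
Proof.
  intros eps Heps. exists 1. split; [lra|]. intros n u v _ _ _.
  rewrite (sumR_ext n _ (fun _ => 0)). rewrite sumR_const. lra.
  intros; rewrite Rminus_0_r, Rabs_R0; reflexivity.
Qed.

Lemma ac_plus f g a b : abs_continuous_on f a b -> abs_continuous_on g a b ->
  abs_continuous_on (fun t => f t + g t) a b.
Proof.
  intros Hf Hg eps Heps.
  destruct (Hf (eps/2)) as (d1 & Hd1 & H1); [lra|].
  destruct (Hg (eps/2)) as (d2 & Hd2 & H2); [lra|].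
  exists (Rmin d1 d2). split; [apply Rmin_glb_lt; auto|].
  intros n u v Ha Hb Hc.
  assert (Hm1 := Rmin_l d1 d2). assert (Hm2 := Rmin_r d1 d2).
  specialize (H1 n u v Ha Hb ltac:(lra)). specialize (H2 n u v Ha Hb ltac:(lra)).
  eapply Rle_lt_trans.
  apply sumR_le with (g := fun i => Rabs (f (v i) - f (u i)) + Rabs (g (v i) - g (u i))).
  - intros i _. replace (f (v i) + g (v i) - (f (u i) + g (u i))) with
      ((f (v i) - f (u i)) + (g (v i) - g (u i))) by ring. apply Rabs_triang.
  - rewrite sumR_plus. lra.
Qed.

Lemma ac_lip f h a b : abs_continuous_on f a b ->
  (forall p q, Rabs (h p - h q) <= Rabs (p - q)) ->
  abs_continuous_on (fun t => h (f t)) a b.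
Proof.
  intros Hf Hh eps Heps. destruct (Hf eps Heps) as (d & Hd & H).
  exists d. split; auto. intros n u v Ha Hb Hc.
  eapply Rle_lt_trans; [|apply (H n u v Ha Hb Hc)].
  apply sumR_le. intros; apply Hh.
Qed.

Definition pp (c z : R) := Rmax (z - c) 0.

Lemma pp_lip c p q : Rabs (pp c p - pp c q) <= Rabs (p - q).
Proof.
  unfold pp, Rmax. destruct (Rle_dec (p - c) 0), (Rle_dec (q - c) 0);
  unfold Rabs; destruct (Rcase_abs _), (Rcase_abs _); lra.
Qed.

Lemma pp_nonneg c z : 0 <= pp c z.
Proof. unfold pp. apply Rmax_r. Qed.

Lemma pp_zero c z : z <= c -> pp c z = 0.
Proof. intros. unfold pp, Rmax. destruct (Rle_dec (z - c) 0); lra. Qed.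

Lemma pp_pos c z : 0 = pp c z -> z <= c.
Proof. unfold pp, Rmax. destruct (Rle_dec (z - c) 0); lra. Qed.

Definition Vf (k : nat) (c : R) (x : nat -> R -> R) (t : R) :=
  sumR_upto k (fun i => pp c (x i t)).

Lemma Vf_ac k c x a b : (forall i, (1 <= i <= k)%nat -> abs_continuous_on (x i) a b) ->
  abs_continuous_on (Vf k c x) a b.
Proof.
  induction k; intros H.
  - apply ac_zero.
  - unfold Vf. simpl. apply ac_plus.
    + apply IHk. intros; apply H; lia.
    + apply (ac_lip (x (S k)) (pp c)). apply H; lia. apply pp_lip.
Qed.

Lemma s_mono (s : nat -> R) N : (forall i, (1 <= i < N)%nat -> s (S i) < s i) ->
  forall i j, (1 <= i)%nat -> (i < j <= N)%nat -> s j < s i.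
Proof.
  intros Hs i j Hi Hj. induction j; [lia|].
  destruct (Nat.eq_dec i j) as [->|Hne].
  - apply Hs; lia.
  - assert (s j < s i) by (apply IHj; lia). assert (s (S j) < s j) by (apply Hs; lia). lra.
Qed.
Definition Pinv (V : R -> R) (a eps : R) (an bn : nat -> R) (tau : R) : Prop :=
  exists m (u v : nat -> R) (idx : nat -> nat),
    (forall i, (1 <= i <= m)%nat -> a <= u i /\ u i <= v i /\ v i <= tau /\
        an (idx i) <= u i /\ v i <= bn (idx i)) /\
    (forall i, (1 <= i < m)%nat -> v i <= u (S i)) /\
    V tau - V a <= eps * (tau - a) + sumR_upto m (fun i => Rabs (V (v i) - V (u i))).

Lemma P_start V a eps an bn : Pinv V a eps an bn a.
Proof.
  exists O, (fun _ => 0), (fun _ => 0), (fun _ => O). split; [|split].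
  - intros; lia.
  - intros; lia.
  - simpl. lra.
Qed.

Lemma P_good V a eps an bn t1 t2 : Pinv V a eps an bn t1 -> t1 <= t2 ->
  V t2 - V t1 <= eps * (t2 - t1) -> Pinv V a eps an bn t2.
Proof.
  intros (m & u & v & idx & H1 & H2 & H3) Ht H.
  exists m, u, v, idx. split; [|split]; auto.
  - intros i Hi. specialize (H1 i Hi). lra.
  - lra.
Qed.

Lemma P_bad V a eps an bn t1 t2 n : 0 <= eps -> Pinv V a eps an bn t1 -> a <= t1 -> t1 <= t2 ->
  an n <= t1 -> t2 <= bn n -> Pinv V a eps an bn t2.
Proof.
  intros Heps (m & u & v & idx & H1 & H2 & H3) Ha Ht Hn1 Hn2.
  exists (S m), (fun i => if (i =? S m)%nat then t1 else u i),
    (fun i => if (i =? S m)%nat then t2 else v i),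
    (fun i => if (i =? S m)%nat then n else idx i).
  split; [|split].
  - intros i Hi. destruct (Nat.eqb_spec i (S m)).
    + lra.
    + specialize (H1 i ltac:(lia)). lra.
  - intros i Hi. destruct (Nat.eqb_spec i (S m)); [lia|].
    destruct (Nat.eqb_spec (S i) (S m)).
    + assert (i = m) by lia. subst. specialize (H1 m ltac:(lia)). lra.
    + apply H2; lia.
  - cbn [sumR_upto]. rewrite Nat.eqb_refl.
    rewrite (sumR_ext m _ (fun i => Rabs (V (v i) - V (u i)))).
    + assert (Rabs (V t2 - V t1) >= V t2 - V t1) by (unfold Rabs; destruct (Rcase_abs _); lra).
      assert (eps * (t1 - a) <= eps * (t2 - a)) by (apply Rmult_le_compat_l; lra). lra.
    + intros i Hi. destruct (Nat.eqb_spec i (S m)); [lia|reflexivity].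
Qed.

Lemma chain m u v : (forall i, (1 <= i <= m)%nat -> u i <= v i) ->
  (forall i, (1 <= i < m)%nat -> v i <= u (S i)) ->
  forall i j, (1 <= i)%nat -> (i < j <= m)%nat -> v i <= u j.
Proof.
  intros H1 H2 i j Hi Hj. induction j; [lia|].
  destruct (Nat.eq_dec i j) as [->|Hne].
  - apply H2; lia.
  - assert (v i <= u j) by (apply IHj; lia). assert (u j <= v j) by (apply H1; lia).
    assert (v j <= u (S j)) by (apply H2; lia). lra.
Qed.

Lemma grp1 m u v (sel : nat -> bool) A : forall B, A <= B ->
  (forall i, (1 <= i <= m)%nat -> sel i = true -> A <= u i /\ v i <= B) ->
  (forall i, (1 <= i <= m)%nat -> u i <= v i) ->
  (forall i, (1 <= i < m)%nat -> v i <= u (S i)) ->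
  sumR_upto m (fun i => if sel i then v i - u i else 0) <= B - A.
Proof.
  induction m; intros B HAB Hs Huv Hord; simpl; [lra|].
  destruct (sel (S m)) eqn:E.
  - destruct (Hs (S m) ltac:(lia) E) as [HA HB].
    assert (sumR_upto m (fun i => if sel i then v i - u i else 0) <= u (S m) - A).
    { apply IHm; auto.
      - intros i Hi Hsi. split; [apply (Hs i ltac:(lia) Hsi)|].
        apply (chain (S m) u v Huv Hord); lia.
      - intros; apply Huv; lia.
      - intros; apply Hord; lia. }
    lra.
  - assert (sumR_upto m (fun i => if sel i then v i - u i else 0) <= B - A).
    { apply IHm; auto.
      - intros i Hi Hsi. apply (Hs i ltac:(lia) Hsi).
      - intros; apply Huv; lia.
      - intros; apply Hord; lia. }
    lra.
Qed.

Lemma sum_ind_pt p c M : (p <= M)%nat ->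
  sum_f_R0 (fun n => if (p =? n)%nat then c else 0) M = c.
Proof.
  induction M; intros Hp.
  - assert (p = 0%nat) by lia. subst. simpl. reflexivity.
  - rewrite tech5. destruct (Nat.eq_dec p (S M)) as [->|Hne].
    + rewrite Nat.eqb_refl.
      rewrite (sum_eq _ (fun _ => 0)).
      * clear. induction M; simpl in *; lra.
      * intros i Hi. destruct (Nat.eqb_spec (S M) i); [lia|reflexivity].
    + rewrite IHM by lia. destruct (Nat.eqb_spec p (S M)); [lia|]. lra.
Qed.

Lemma grp_exch m f idx M : (forall i, (1 <= i <= m)%nat -> (idx i <= M)%nat) ->
  sumR_upto m f = sum_f_R0 (fun n => sumR_upto m (fun i => if (idx i =? n)%nat then f i else 0)) M.
Proof.
  induction m; intros H; simpl.
  - clear. induction M; simpl in *; lra.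
  - rewrite sum_plus, <- IHm by (intros; apply H; lia).
    rewrite sum_ind_pt by (apply H; lia). reflexivity.
Qed.

Lemma idx_bound m (idx : nat -> nat) : exists M, forall i, (1 <= i <= m)%nat -> (idx i <= M)%nat.
Proof.
  induction m.
  - exists O. intros; lia.
  - destruct IHm as [M HM]. exists (Nat.max M (idx (S m))). intros i Hi.
    destruct (Nat.eq_dec i (S m)) as [->|]; [lia|]. specialize (HM i ltac:(lia)). lia.
Qed.
Definition gauge_ok (V : R -> R) (a b : R) (E : R -> Prop) : Prop :=
  forall t, a <= t <= b -> ~ E t -> forall eps, 0 < eps -> exists d, 0 < d /\
    forall tau, a <= tau <= b -> Rabs (tau - t) < d ->
      (t <= tau -> V tau - V t <= eps * (tau - t)) /\
      (tau <= t -> V t - V tau <= eps * (t - tau)).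

Lemma mono_eps V a b E eps eps' : a <= b -> abs_continuous_on V a b -> negligible E ->
  gauge_ok V a b E -> 0 < eps -> 0 < eps' -> V b - V a <= eps * (b - a) + eps'.
Proof.
  intros Hab Hac Hneg G Heps Heps'.
  destruct (Hac eps' Heps') as (dl & Hdl & Hac').
  destruct (Hneg dl Hdl) as (an & bn & Hanb & Hcov & Hsum).
  set (S := fun tau => a <= tau <= b /\ Pinv V a eps an bn tau).
  assert (Sa : S a) by (split; [lra|apply P_start]).
  destruct (completeness S) as [sg [Hub Hlub]].
  { exists b. intros t [Ht _]. lra. }
  { exists a; auto. }
  assert (Hasg : a <= sg) by (apply Hub; auto).
  assert (Hsgb : sg <= b) by (apply Hlub; intros t [Ht _]; lra).
  assert (approx : forall r, 0 < r -> exists tau, S tau /\ sg - r < tau).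
  { intros r Hr. apply NNPP. intros Hn.
    assert (sg <= sg - r); [|lra].
    apply Hlub. intros t Ht. apply Rnot_lt_le. intros Hlt. apply Hn. exists t; auto. }
  assert (Psg : Pinv V a eps an bn sg).
  { destruct (Req_dec sg a) as [->|Hne]; [apply P_start|].
    destruct (classic (E sg)) as [HE|HE].
    - destruct (Hcov sg HE) as [n Hn].
      destruct (approx (sg - an n)) as (tau & [Ht Pt] & Htau); [lra|].
      assert (tau <= sg) by (apply Hub; split; auto).
      apply (P_bad V a eps an bn tau sg n); auto; lra.
    - destruct (G sg ltac:(lra) HE eps Heps) as (d & Hd & Hg).
      destruct (approx d Hd) as (tau & [Ht Pt] & Htau).
      assert (tau <= sg) by (apply Hub; split; auto).
      apply (P_good V a eps an bn tau sg); auto.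
      apply (Hg tau ltac:(lra)); auto. rewrite Rabs_left1; lra. }
  assert (Hsgb' : sg = b).
  { destruct (Req_dec sg b) as [|Hne]; auto. exfalso.
    destruct (classic (E sg)) as [HE|HE].
    - destruct (Hcov sg HE) as [n Hn].
      set (t' := sg + Rmin ((bn n - sg)/2) (b - sg)).
      assert (H1 := Rmin_l ((bn n - sg)/2) (b - sg)).
      assert (H2 := Rmin_r ((bn n - sg)/2) (b - sg)).
      assert (H3 : 0 < Rmin ((bn n - sg)/2) (b - sg)) by (apply Rmin_glb_lt; lra).
      assert (S t').
      { split; [unfold t'; lra|]. apply (P_bad V a eps an bn sg t' n); unfold t'; auto; lra. }
      assert (t' <= sg) by (apply Hub; auto). unfold t' in *; lra.
    - destruct (G sg ltac:(lra) HE eps Heps) as (d & Hd & Hg).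
      set (t' := sg + Rmin (d/2) (b - sg)).
      assert (H1 := Rmin_l (d/2) (b - sg)).
      assert (H2 := Rmin_r (d/2) (b - sg)).
      assert (H3 : 0 < Rmin (d/2) (b - sg)) by (apply Rmin_glb_lt; lra).
      assert (S t').
      { split; [unfold t'; lra|]. apply (P_good V a eps an bn sg t'); unfold t'; auto; [lra|].
        apply (Hg (sg + Rmin (d / 2) (b - sg)) ltac:(lra)); [|lra].
        rewrite Rabs_right; lra. }
      assert (t' <= sg) by (apply Hub; auto). unfold t' in *; lra. }
  subst sg.
  destruct Psg as (m & u & v & idx & H1 & H2 & H3).
  destruct (idx_bound m idx) as [M HM].
  assert (Hlen : sumR_upto m (fun i => v i - u i) < dl).
  { rewrite (grp_exch m _ idx M HM).
    eapply Rle_lt_trans; [|apply (Hsum M)].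
    apply sum_Rle. intros n _.
    apply (grp1 m u v (fun i => (idx i =? n)%nat) (an n) (bn n)); auto.
    - intros i Hi Hs. apply Nat.eqb_eq in Hs. subst n. specialize (H1 i Hi). lra.
    - intros i Hi. specialize (H1 i Hi); lra. }
  assert (sumR_upto m (fun i => Rabs (V (v i) - V (u i))) < eps').
  { apply Hac'; auto. intros i Hi. specialize (H1 i Hi). lra. }
  lra.
Qed.

Lemma mono V a b E : a <= b -> abs_continuous_on V a b -> negligible E ->
  gauge_ok V a b E -> V b <= V a.
Proof.
  intros Hab Hac Hneg G. apply Rnot_lt_le. intros Hlt.
  set (D := V b - V a).
  set (eps := D / (4 * (b - a + 1))).
  assert (Heps : 0 < eps) by (unfold eps, D; apply Rdiv_lt_0_compat; lra).
  assert (He : eps * (b - a + 1) = D / 4) by (unfold eps; field; lra).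
  assert (H := mono_eps V a b E eps (D/2) Hab Hac Hneg G Heps ltac:(unfold D; lra)).
  assert (eps * (b - a) <= D / 4) by nra.
  unfold D in *; lra.
Qed.
Lemma deriv_bound f t d : derivable_pt_lim f t d -> forall e, 0 < e ->
  exists dl, 0 < dl /\ forall tau, Rabs (tau - t) < dl ->
    Rabs (f tau - f t - d * (tau - t)) <= e * Rabs (tau - t).
Proof.
  intros H e He. destruct (H e He) as [[dl Hdl] Hd]. exists dl. split; auto.
  intros tau Ht. destruct (Req_dec tau t) as [->|Hne].
  - replace (f t - f t - d * (t - t)) with 0 by ring. rewrite Rabs_R0, Rminus_diag, Rabs_R0. lra.
  - assert (Hh : tau - t <> 0) by lra.
    specialize (Hd (tau - t) Hh Ht). replace (t + (tau - t)) with tau in Hd by ring.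
    replace (f tau - f t - d * (tau - t)) with ((tau - t) * ((f tau - f t) / (tau - t) - d))
      by (field; auto).
    rewrite Rabs_mult. rewrite Rmult_comm. apply Rmult_le_compat_r; [apply Rabs_pos|lra].
Qed.

Definition rr (c y d : R) := if Rlt_dec c y then d else if Rlt_dec y c then 0 else Rmax d 0.
Definition ll (c y d : R) := if Rlt_dec c y then d else 0.

Lemma pp_gauge f t d c : derivable_pt_lim f t d -> forall e, 0 < e ->
  exists dl, 0 < dl /\ forall tau,
    (t <= tau -> tau - t < dl -> pp c (f tau) - pp c (f t) <= (rr c (f t) d + e) * (tau - t)) /\
    (tau <= t -> t - tau < dl -> pp c (f t) - pp c (f tau) <= (ll c (f t) d + e) * (t - tau)).
Proof.
  intros Hd e He. destruct (deriv_bound f t d Hd e He) as (d1 & Hd1 & Hb).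
  set (y := f t). set (K := Rabs d + e + 1).
  assert (HK : 0 < K) by (unfold K; assert (0 <= Rabs d) by apply Rabs_pos; lra).
  assert (Hgen : forall tau, Rabs (tau - t) < d1 ->
     f tau - y - d * (tau - t) <= e * Rabs (tau - t) /\ - (e * Rabs (tau - t)) <= f tau - y - d * (tau - t)).
  { intros tau Ht. specialize (Hb tau Ht). unfold y.
    split; [apply Rle_trans with (2 := Hb); apply Rle_abs|].
    apply Ropp_le_cancel. rewrite Ropp_involutive. apply Rle_trans with (2 := Hb).
    rewrite <- Rabs_Ropp. apply Rle_abs. }
  assert (Habs : forall h, - (Rabs d * Rabs h) <= d * h <= Rabs d * Rabs h).
  { intros h. rewrite <- Rabs_mult. split; [|apply Rle_abs].
    apply Ropp_le_cancel. rewrite Ropp_involutive. rewrite <- Rabs_Ropp. apply Rle_abs. }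
  assert (Hr : 0 < Rabs (y - c) / K \/ y = c).
  { destruct (Req_dec y c); [right; auto|left]. apply Rdiv_lt_0_compat; auto.
    apply Rabs_pos_lt. lra. }
  destruct Hr as [Hr|Hr].
  - exists (Rmin d1 (Rabs (y - c) / K)). split; [apply Rmin_glb_lt; auto|].
    assert (HKK : Rabs (y - c) / K * K = Rabs (y - c)) by (field; lra).
    intros tau.
    assert (Hcl : Rabs (tau - t) < Rmin d1 (Rabs (y - c) / K) -> Rabs (f tau - y) < Rabs (y - c)).
    { intros Ht. assert (Rabs (tau - t) < d1) by (eapply Rlt_le_trans; [apply Ht|apply Rmin_l]).
      assert (Rabs (tau - t) < Rabs (y - c) / K) by (eapply Rlt_le_trans; [apply Ht|apply Rmin_r]).
      destruct (Hgen tau H) as [G1 G2]. destruct (Habs (tau - t)) as [A1 A2].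
      assert (Rabs (tau - t) * K < Rabs (y - c)) by nra.
      assert (0 <= Rabs (tau - t)) by apply Rabs_pos.
      unfold K in *.
      apply Rabs_def1; nra. }
    assert (Hdl : forall tau, Rabs (tau - t) < Rmin d1 (Rabs (y - c) / K) -> Rabs (tau - t) < d1)
      by (intros tau' Ht; eapply Rlt_le_trans; [apply Ht|apply Rmin_l]).
    assert (Hyc : y <> c) by (intro Ey; rewrite Ey, Rminus_diag, Rabs_R0 in Hr; unfold Rdiv in Hr; lra).
    unfold rr, ll. fold y.
    destruct (Rlt_dec c y); [|destruct (Rlt_dec y c); [|exfalso; apply Hyc; lra]].
    + 
      split; intros H1 H2.
      * assert (Ht : Rabs (tau - t) < Rmin d1 (Rabs (y - c) / K)) by (rewrite Rabs_right; lra).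
        specialize (Hcl Ht). rewrite (Rabs_right (y - c)) in Hcl by lra. destruct (Hgen tau (Hdl tau Ht)) as [G1 G2].
        rewrite Rabs_right in G1, G2 by lra.
        assert (f tau - y > - (y - c)) by (apply Rabs_def2 in Hcl; lra).
        unfold pp. rewrite Rmax_left by lra. fold y. rewrite Rmax_left by lra. nra.
      * assert (Ht : Rabs (tau - t) < Rmin d1 (Rabs (y - c) / K)) by (rewrite Rabs_left1; lra).
        specialize (Hcl Ht). rewrite (Rabs_right (y - c)) in Hcl by lra. destruct (Hgen tau (Hdl tau Ht)) as [G1 G2].
        rewrite Rabs_left1 in G1, G2 by lra.
        assert (f tau - y > - (y - c)) by (apply Rabs_def2 in Hcl; lra).
        unfold pp. rewrite Rmax_left by lra. fold y. rewrite Rmax_left by lra. nra.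
    + 
      split; intros H1 H2.
      * assert (Ht : Rabs (tau - t) < Rmin d1 (Rabs (y - c) / K)) by (rewrite Rabs_right; lra).
        specialize (Hcl Ht). rewrite (Rabs_left (y - c)) in Hcl by lra.
        assert (f tau - y < - (y - c)) by (apply Rabs_def2 in Hcl; lra).
        unfold pp. rewrite Rmax_right by lra. fold y. rewrite Rmax_right by lra. nra.
      * assert (Ht : Rabs (tau - t) < Rmin d1 (Rabs (y - c) / K)) by (rewrite Rabs_left1; lra).
        specialize (Hcl Ht). rewrite (Rabs_left (y - c)) in Hcl by lra.
        assert (f tau - y < - (y - c)) by (apply Rabs_def2 in Hcl; lra).
        unfold pp. rewrite Rmax_right by lra. fold y. rewrite Rmax_right by lra. nra.
  - exists d1. split; auto. intros tau.
    unfold rr, ll. fold y. rewrite Hr.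
    destruct (Rlt_dec c c); [lra|]. clear n.
    assert (Hpy : pp c c = 0) by (apply pp_zero; lra).
    rewrite Hpy. split; intros H1 H2.
    + assert (Ht : Rabs (tau - t) < d1) by (rewrite Rabs_right; lra).
      destruct (Hgen tau Ht) as [G1 G2]. rewrite Rabs_right in G1 by lra.
      assert (d * (tau - t) <= Rmax d 0 * (tau - t)) by (apply Rmult_le_compat_r; [lra|apply Rmax_l]).
      assert (0 <= Rmax d 0 * (tau - t)) by (apply Rmult_le_pos; [apply Rmax_r|lra]).
      unfold pp. rewrite Rminus_0_r. apply Rmax_lub; nra.
    + assert (0 <= pp c (f tau)) by apply pp_nonneg. nra.
Qed.
Lemma fin_delta k (Q : nat -> R -> Prop) :
  (forall i, (1 <= i <= k)%nat -> exists dl, 0 < dl /\ Q i dl) ->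
  (forall i dl dl', Q i dl -> 0 < dl' -> dl' <= dl -> Q i dl') ->
  exists dl, 0 < dl /\ forall i, (1 <= i <= k)%nat -> Q i dl.
Proof.
  intros H Hm. induction k.
  - exists 1. split; [lra|]. intros; lia.
  - destruct IHk as (d1 & Hd1 & H1); [intros; apply H; lia|].
    destruct (H (S k) ltac:(lia)) as (d2 & Hd2 & H2).
    exists (Rmin d1 d2). split; [apply Rmin_glb_lt; auto|].
    intros i Hi. destruct (Nat.eq_dec i (S k)) as [->|Hne].
    + apply (Hm _ d2); auto; [apply Rmin_glb_lt; auto|apply Rmin_r].
    + apply (Hm _ d1); auto; [apply H1; lia|apply Rmin_glb_lt; auto|apply Rmin_l].
Qed.

Lemma sumR_minus n f g : sumR_upto n (fun i => f i - g i) = sumR_upto n f - sumR_upto n g.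
Proof. induction n; simpl; [lra|]. rewrite IHn. lra. Qed.

Lemma Vf_gauge k c x t d :
  (forall i, (1 <= i <= k)%nat -> derivable_pt_lim (x i) t (d i)) ->
  sumR_upto k (fun i => rr c (x i t) (d i)) <= 0 ->
  sumR_upto k (fun i => ll c (x i t) (d i)) <= 0 ->
  forall eps, 0 < eps -> exists dl, 0 < dl /\ forall tau, Rabs (tau - t) < dl ->
    (t <= tau -> Vf k c x tau - Vf k c x t <= eps * (tau - t)) /\
    (tau <= t -> Vf k c x t - Vf k c x tau <= eps * (t - tau)).
Proof.
  intros Hd Hr Hl eps Heps.
  assert (HK : 0 < INR k + 1) by (assert (0 <= INR k) by apply pos_INR; lra).
  set (e := eps / (INR k + 1)).
  assert (He : 0 < e) by (unfold e; apply Rdiv_lt_0_compat; lra).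
  assert (Hke : INR k * e <= eps).
  { assert (e * (INR k + 1) = eps) by (unfold e; field; lra). nra. }
  destruct (fin_delta k (fun i dl => forall tau,
    (t <= tau -> tau - t < dl -> pp c (x i tau) - pp c (x i t) <= (rr c (x i t) (d i) + e) * (tau - t)) /\
    (tau <= t -> t - tau < dl -> pp c (x i t) - pp c (x i tau) <= (ll c (x i t) (d i) + e) * (t - tau))))
    as (dl & Hdl & HQ).
  { intros i Hi. apply pp_gauge; auto. }
  { intros i dl dl' HQ Hp Hle tau. destruct (HQ tau) as [A B].
    split; intros; [apply A|apply B]; auto; lra. }
  exists dl. split; auto. intros tau Ht. unfold Vf. split; intros Hle.
  - rewrite <- sumR_minus.
    eapply Rle_trans. apply sumR_le with (g := fun i => (tau - t) * rr c (x i t) (d i) + e * (tau - t)).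
    + intros i Hi. destruct (HQ i Hi tau) as [A _].
      rewrite Rabs_right in Ht by lra.
      eapply Rle_trans; [apply A; auto|]. lra.
    + rewrite sumR_plus, sumR_scal, sumR_const. nra.
  - rewrite <- sumR_minus.
    eapply Rle_trans. apply sumR_le with (g := fun i => (t - tau) * ll c (x i t) (d i) + e * (t - tau)).
    + intros i Hi. destruct (HQ i Hi tau) as [_ B].
      rewrite Rabs_left1 in Ht by lra.
      eapply Rle_trans; [apply B; auto; lra|]. lra.
    + rewrite sumR_plus, sumR_scal, sumR_const. nra.
Qed.
Lemma core N (s : nat -> R) (a : nat -> nat -> R) k (y : nat -> R) (th d : nat -> R) :
  (1 <= k <= N)%nat ->
  (forall i, (1 <= i < N)%nat -> s (S i) < s i) -> 0 < s N ->
  (forall i j, (1 <= i <= N)%nat -> (1 <= j <= N)%nat -> a i j = a j i /\ 0 <= a i j) ->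
  (forall i, (1 <= i <= k)%nat ->
     d i = sumR_upto N (fun j => a i j * (sat (s j) (y j) - sat (s i) (y i)))) ->
  (forall i, (1 <= i <= k)%nat -> (th i = 1 /\ s k <= y i) \/ (th i = 0 /\ y i <= s k)) ->
  sumR_upto k (fun i => th i * d i) <= 0.
Proof.
  intros Hk Hs HsN Ha Hd Hth.
  set (c := s k). set (z := fun j => sat (s j) (y j)).
  assert (Hmono := s_mono s N Hs).
  assert (Hc : 0 < c).
  { unfold c. destruct (Nat.eq_dec k N) as [->|]; auto.
    assert (s N < s k) by (apply Hmono; lia). lra. }
  assert (Hsi : forall i, (1 <= i <= k)%nat -> c <= s i).
  { intros i Hi. unfold c. destruct (Nat.eq_dec i k) as [->|]; [lra|].
    assert (s k < s i) by (apply Hmono; lia). lra. }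
  assert (Hsj : forall j, (k < j <= N)%nat -> s j < c) by (intros; apply Hmono; lia).
  assert (Hs0 : forall j, (1 <= j <= N)%nat -> 0 <= s j).
  { intros j Hj. destruct (Nat.eq_dec j N) as [->|]; [lra|].
    assert (s N < s j) by (apply Hmono; lia). lra. }
  assert (Hz1 : forall i, (1 <= i <= k)%nat -> th i = 1 -> c <= z i).
  { intros i Hi Ht. destruct (Hth i Hi) as [[_ H]|[H _]]; [|lra].
    apply sat_ge; auto. }
  assert (Hz0 : forall i, (1 <= i <= k)%nat -> th i = 0 -> z i <= c).
  { intros i Hi Ht. destruct (Hth i Hi) as [[H _]|[_ H]]; [lra|].
    apply sat_le; auto; try lra. apply Hs0; lia. }
  assert (Hzj : forall j, (k < j <= N)%nat -> z j <= c).
  { intros j Hj. unfold z. assert (sat (s j) (y j) <= s j) by (apply sat_le_s; apply Hs0; lia).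
    specialize (Hsj j Hj). lra. }
  assert (Hth01 : forall i, (1 <= i <= k)%nat -> th i = 0 \/ th i = 1).
  { intros i Hi. destruct (Hth i Hi) as [[H _]|[H _]]; auto. }
  rewrite (sumR_ext k _ (fun i => sumR_upto k (fun j => th i * (a i j * (z j - z i))) +
       sumR_upto N (fun j => if (j <=? k)%nat then 0 else th i * (a i j * (z j - z i))))).
  2:{ intros i Hi. rewrite Hd by auto. rewrite <- sumR_scal.
      rewrite (sumR_split N k) by lia. reflexivity. }
  rewrite sumR_plus.
  assert (Hsec : sumR_upto k (fun i => sumR_upto N (fun j =>
      if (j <=? k)%nat then 0 else th i * (a i j * (z j - z i)))) <= 0).
  { apply sumR_nonpos. intros i Hi. apply sumR_nonpos. intros j Hj.
    destruct (Nat.leb_spec j k); [lra|].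
    destruct (Ha i j ltac:(lia) Hj) as [_ Hpos].
    destruct (Hth01 i Hi) as [E|E]; rewrite E; [lra|].
    specialize (Hz1 i Hi E). specialize (Hzj j ltac:(lia)).
    assert (0 <= a i j * (z i - z j)) by (apply Rmult_le_pos; lra).
    replace (a i j * (z j - z i)) with (- (a i j * (z i - z j))) by ring.
    lra. }
  set (D := sumR_upto k (fun i => sumR_upto k (fun j => th i * (a i j * (z j - z i))))).
  assert (HD2 : D = sumR_upto k (fun i => sumR_upto k (fun j => th j * (a i j * (z i - z j))))).
  { unfold D. rewrite sumR_swap. apply sumR_ext. intros i Hi. apply sumR_ext. intros j Hj.
    destruct (Ha i j ltac:(lia) ltac:(lia)) as [E _]. rewrite E. reflexivity. }
  assert (HD : D + D <= 0).
  { rewrite HD2 at 2. unfold D. rewrite <- sumR_plus. apply sumR_nonpos. intros i Hi.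
    rewrite <- sumR_plus. apply sumR_nonpos. intros j Hj.
    destruct (Ha i j ltac:(lia) ltac:(lia)) as [_ Hpos].
    destruct (Hth01 i Hi) as [Ei|Ei]; destruct (Hth01 j Hj) as [Ej|Ej]; rewrite Ei, Ej.
    - lra.
    - specialize (Hz0 i Hi Ei). specialize (Hz1 j Hj Ej).
      assert (0 <= a i j * (z j - z i)) by (apply Rmult_le_pos; lra). lra.
    - specialize (Hz1 i Hi Ei). specialize (Hz0 j Hj Ej).
      assert (0 <= a i j * (z i - z j)) by (apply Rmult_le_pos; lra). lra.
    - lra. }
  fold D. lra.
Qed.
Definition rhs N (s : nat -> R) (alpha : nat -> nat -> R -> R) (x : nat -> R -> R) i t :=
  sumR_upto N (fun j => alpha i j t * (sat (s j) (x j t) - sat (s i) (x i t))).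

Lemma bad_neg N s alpha t0 x : cara_solution N s alpha t0 x ->
  forall m, (m <= N)%nat -> negligible (fun t => exists i, (1 <= i <= m)%nat /\ t0 < t /\
      ~ derivable_pt_lim (x i) t (rhs N s alpha x i t)).
Proof.
  intros Hc m. induction m; intros Hm.
  - apply (neg_mono _ _ neg_empty). intros t (i & Hi & _). lia.
  - destruct (Hc (S m) ltac:(lia)) as [_ (E & HE & Hder)].
    apply (neg_mono _ _ (neg_union _ _ (IHm ltac:(lia)) HE)).
    intros t (i & Hi & Ht & Hnd). destruct (Nat.eq_dec i (S m)) as [->|Hne].
    + right. apply NNPP. intros HnE. apply Hnd. apply Hder; auto.
    + left. exists i. split; [lia|]. auto.
Qed.

Lemma rr_th c y d : rr c y d =
  (if Rlt_dec c y then 1 else if Rlt_dec y c then 0 else if Rlt_dec 0 d then 1 else 0) * d.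
Proof.
  unfold rr, Rmax. destruct (Rlt_dec c y); [lra|]. destruct (Rlt_dec y c); [lra|].
  destruct (Rle_dec d 0), (Rlt_dec 0 d); lra.
Qed.

Lemma ll_th c y d : ll c y d = (if Rlt_dec c y then 1 else 0) * d.
Proof. unfold ll. destruct (Rlt_dec c y); lra. Qed.

Lemma upper (N : nat) (s : nat -> R) (alpha : nat -> nat -> R -> R)
  (t0 : R) (x : nat -> R -> R) (k : nat) (tstar : R) :
  (1 <= N)%nat ->
  (forall i, (1 <= i < N)%nat -> s (S i) < s i) ->
  0 < s N ->
  standing_weights N alpha ->
  0 <= t0 ->
  cara_solution N s alpha t0 x ->
  (1 <= k <= N)%nat ->
  t0 <= tstar ->
  (forall i, (1 <= i <= k)%nat -> x i tstar <= s k) ->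
  forall t, tstar <= t ->
    forall i, (1 <= i <= k)%nat -> x i t <= s k.
Proof.
  intros HN Hs HsN Hw Ht0 Hc Hk Hts Hinit T HT.
  set (c := s k). set (V := Vf k c x).
  assert (HVT : V T <= V tstar).
  { apply (mono V tstar T (fun t => t = tstar \/ exists i, (1 <= i <= k)%nat /\ t0 < t /\
      ~ derivable_pt_lim (x i) t (rhs N s alpha x i t))); auto.
    - apply Vf_ac. intros i Hi. destruct (Hc i ltac:(lia)) as [Hac _].
      apply (ac_left _ t0); auto. apply Hac. lra.
    - apply neg_union; [apply neg_single|]. apply (bad_neg N s alpha t0 x Hc k). lia.
    - intros t Ht Hgood eps Heps.
      assert (Htt : t <> tstar) by (intro; apply Hgood; left; auto).
      assert (Hder : forall i, (1 <= i <= k)%nat -> derivable_pt_lim (x i) t (rhs N s alpha x i t)).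
      { intros i Hi. apply NNPP. intros Hn. apply Hgood. right. exists i. split; auto. split; auto. lra. }
      assert (Hal : forall i j, (1 <= i <= N)%nat -> (1 <= j <= N)%nat ->
                alpha i j t = alpha j i t /\ 0 <= alpha i j t).
      { intros i j Hi Hj. destruct (Hw i j Hi Hj) as [H _]. apply H. lra. }
      destruct (Vf_gauge k c x t (fun i => rhs N s alpha x i t) Hder) with (eps := eps)
        as (dl & Hdl & Hg); auto.
      + rewrite (sumR_ext k _ (fun i => (if Rlt_dec c (x i t) then 1 else if Rlt_dec (x i t) c then 0
            else if Rlt_dec 0 (rhs N s alpha x i t) then 1 else 0) * rhs N s alpha x i t))
          by (intros; apply rr_th).
        apply (core N s (fun i j => alpha i j t) k (fun i => x i t)); auto.
        intros i Hi. fold c. destruct (Rlt_dec c (x i t)); [left; lra|].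
        destruct (Rlt_dec (x i t) c); [right; lra|].
        destruct (Rlt_dec 0 (rhs N s alpha x i t)); [left|right]; lra.
      + rewrite (sumR_ext k _ (fun i => (if Rlt_dec c (x i t) then 1 else 0) * rhs N s alpha x i t))
          by (intros; apply ll_th).
        apply (core N s (fun i j => alpha i j t) k (fun i => x i t)); auto.
        intros i Hi. fold c. destruct (Rlt_dec c (x i t)); [left|right]; lra.
      + exists dl. split; [exact Hdl|]. intros tau _ Htau. apply Hg; auto. }
  assert (HV0 : V tstar = 0).
  { unfold V, Vf. rewrite (sumR_ext k _ (fun _ => 0)). rewrite sumR_const. lra.
    intros i Hi. apply pp_zero. apply Hinit; auto. }
  intros i Hi. apply pp_pos.
  assert (pp c (x i T) <= V T).
  { unfold V, Vf. apply (sumR_ge_term k (fun i => pp c (x i T))); auto. intros; apply pp_nonneg. }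
  assert (0 <= pp c (x i T)) by apply pp_nonneg. lra.
Qed.

Lemma cara_opp N s alpha t0 x : cara_solution N s alpha t0 x ->
  cara_solution N s alpha t0 (fun i t => - x i t).
Proof.
  intros Hc i Hi. destruct (Hc i Hi) as [Hac (E & HE & Hd)]. split.
  - intros T HTT. apply (ac_lip (x i) Ropp). apply Hac; auto.
    intros p q. replace (- p - - q) with (- (p - q)) by ring. rewrite Rabs_Ropp. lra.
  - exists E. split; auto. intros t Ht HnE.
    replace (sumR_upto N (fun j => alpha i j t * (sat (s j) (- x j t) - sat (s i) (- x i t))))
      with (- sumR_upto N (fun j => alpha i j t * (sat (s j) (x j t) - sat (s i) (x i t)))).
    + apply (derivable_pt_lim_opp (x i)). apply Hd; auto.
    + rewrite <- (Rmult_1_l (sumR_upto _ _)), Ropp_mult_distr_l, <- sumR_scal.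
      apply sumR_ext. intros j _. rewrite !sat_opp. ring.
Qed.

Theorem lemma11 (N : nat) (s : nat -> R) (alpha : nat -> nat -> R -> R)
  (t0 : R) (x : nat -> R -> R) (k : nat) (tstar : R) :
  (1 <= N)%nat ->
  (forall i, (1 <= i < N)%nat -> s (S i) < s i) ->
  0 < s N ->
  standing_weights N alpha ->
  0 <= t0 ->
  cara_solution N s alpha t0 x ->
  (1 <= k <= N)%nat ->
  t0 <= tstar ->
  (forall i, (1 <= i <= k)%nat -> - s k <= x i tstar <= s k) ->
  forall t, tstar <= t ->
    forall i, (1 <= i <= k)%nat -> - s k <= x i t <= s k.
Proof.
  intros HN Hs HsN Hw Ht0 Hc Hk Hts Hinit t Ht i Hi. split.
  - assert (- x i t <= s k); [|lra].
    apply (upper N s alpha t0 (fun i t => - x i t) k tstar); auto.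
    + apply cara_opp; auto.
    + intros j Hj. specialize (Hinit j Hj). lra.
  - apply (upper N s alpha t0 x k tstar); auto.
    intros j Hj. apply Hinit; auto.
Qed.
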